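(* In the wake-up algorithm with advice described in the context, let $B_1$ be the set of nodes $v$ with advice bit $g_v=1$. Then the message complexity over all phases in which some node of $B_1$ is the actor is $O\left(\sqrt{\frac{n^3}{2^\beta}}\log n\right)$ with high probability, where $\beta=\max\{\lfloor(\alpha-1)/2\rfloor,0\}$.
   Context: Model: connected graph on $n$ nodes, unique IDs in $[n]$, synchronous port numbering $\mathsf{CONGEST}$ model with quantum routing (classical link plus quantum channel per edge; sleeping nodes wake only on classical messages, and a quantum message to a sleeping node causes a $-1$ phase reflection, awake nodes reflect $+1$). Message complexity counts classical messages plus, per round, the maximum number of quantum messages over all computational-basis configurations of the global state. Each node gets at most $\alpha$ advice bits from an oracle that knows everything including the initially awake set $A_1$. Sets: $A_0=\emptyset$, $S_i=(\bigcup_{u\in A_i}N_u)\setminus(A_i\cup A_{i-1})$, $A_{i+1}=S_i$; listing $A_i$ as $v_1^{(i)},\dots$ by increasing ID, $S^{(i)}_{v_j^{(i)}}=N_{v_j^{(i)}}\cap(S_i\setminus\bigcup_{k<j}S^{(i)}_{v_k^{(i)}})$; $v$ is an actor of epoch $i$ iff $v\in A_i$. Advice (for $\alpha\ge3$; no advice if $\alpha\le2$): advice tree $\mathcal T_v$ — complete binary tree of depth $\log_2 n_v'$ ($n_v'$ smallest power of 2 $\ge\deg(v)$) with leaves labeled $1,\dots,\deg(v)$ left to right and remaining rightmost leaves labeled $\deg(v)$; a bit string gives a root path and its associated port range is the interval between smallest and largest leaf labels below the path's endpoint; $P_v^\beta(w)$ is the range of the length-$\beta$ string whose range contains $v$'s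 port to $w$. For actor $v$ of epoch $i$: $g_v=1$ iff $|S_v^{(i)}|\ge2^\beta$; $\Lambda_v$ empty if $g_v=1$ or $S_v^{(i)}=\emptyset$, else encodes $P_v^\beta(w_1)$, $w_1$ the smallest-ID node in $S_v^{(i)}$; with $S_1'=S_v^{(i)}$ and $S_j'$ obtained from $S_{j-1}'$ by removing nodes reached by $v$ via ports in $P_v^\beta(w_{j-1})$, $w_j$ the smallest-ID node of $S_j'$, the proxy advice $\Pi_{w_{j-1}}$ stored at $w_{j-1}$ encodes $P_v^\beta(w_j)$ (empty if $S_j'=\emptyset$). Algorithm: epochs of $n$ phases, each phase $Cn\log n$ rounds; initially awake nodes are actors in epoch 1; a node woken during epoch $i$ is an actor in epoch $i+1$, only once, in the phase equal to its ID. Actor $v$: if $g_v=1$ or $\alpha\le2$, it runs $\mathsf{IteratedQuantumSearch}$ (which w.h.p. finds all ports $p$ in a given range $X$ with $f(p)=1$, using $O(\sqrt{|X|\max\{C,1\}}\log n)$ rounds and messages, $C=|f^{-1}(1)|$) over all its ports with $f(p)=1$ iff the neighbor on port $p$ is asleep, waking each found neighbor by a classical message; if $g_v=0$ and $\Lambda_v$ is empty, it does nothing; otherwise it runs $\mathsf{IteratedQuantumSearch}$ on the range of $\Lambda_v$, waking sleeping neighbors there; a woken neighbor $w$ with proxy advice $\Pi_w$ sends it to $v$, and $v$ repeats on the range of the received proxy advice until no new proxy advice arrives. ''With high probability'': probability at least $1-1/n^c$. *)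

(* Defs.v *)
From HB Require Import structures.
From mathcomp Require Import all_boot all_order all_algebra.
From mathcomp Require Import reals exp.
Set Implicit Arguments. Unset Strict Implicit. Unset Printing Implicit Defensive.
Import Order.TTheory GRing.Theory Num.Theory.

(* Graphs.  Nodes are 'I_n; the ID of node v is (val v).+1 in [n], so the   *)
(* order "by increasing ID" is the order of 'I_n.                            *)
Section Graph.
Variables (n : nat) (adj : rel 'I_n).

Definition simple_graph : Prop := symmetric adj /\ irreflexive adj.
Definition connected_graph : Prop := forall x y : 'I_n, connect adj x y.

Definition nbr (v : 'I_n) : {set 'I_n} := [set w | adj v w].
Definition deg (v : 'I_n) : nat := #|nbr v|.

Definition port_numbering (port : 'I_n -> 'I_n -> nat) : Prop :=
  forall v, {in nbr v &, injective (port v)} /\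
            {in nbr v, forall w, 1 <= port v w <= deg v}.

(* Epochs: A_0 = set0, A_1 = initially awake,                                *)
(*   S_i = (\bigcup_{u in A_i} N_u) \ (A_i u A_{i-1}),  A_{i+1} = S_i.      *)
Definition Snext (Ai Aprev : {set 'I_n}) : {set 'I_n} :=
  (\bigcup_(u in Ai) nbr u) :\: (Ai :|: Aprev).

Definition epoch_step (p : {set 'I_n} * {set 'I_n}) :=
  (Snext p.1 p.2, p.1).

Definition epochA (A1 : {set 'I_n}) (i : nat) : {set 'I_n} :=
  if i is i'.+1 then (iter i' epoch_step (A1, set0)).1 else set0.

Definition epochS (A1 : {set 'I_n}) (i : nat) : {set 'I_n} :=
  Snext (epochA A1 i) (epochA A1 i.-1).

(* claimed A S k = \bigcup_{u in A, val u < k} S_u, where, listing A by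
   increasing ID, S_{v_j} = N_{v_j} :&: (S \ \bigcup_{l<j} S_{v_l}). *)
Fixpoint claimed (A S : {set 'I_n}) (k : nat) : {set 'I_n} :=
  if k is k'.+1 then
    claimed A S k' :|:
      (if insub k' is Some u then
         (if u \in A then nbr u :&: (S :\: claimed A S k') else set0)
       else set0)
  else set0.

Definition Spart (A1 : {set 'I_n}) (i : nat) (v : 'I_n) : {set 'I_n} :=
  nbr v :&: (epochS A1 i :\: claimed (epochA A1 i) (epochS A1 i) (val v)).

Definition actor_epoch (A1 : {set 'I_n}) (v : 'I_n) : option nat :=
  omap (@nat_of_ord _) [pick i : 'I_n.+1 | v \in epochA A1 i].

Definition SvOf (A1 : {set 'I_n}) (v : 'I_n) : {set 'I_n} :=
  if actor_epoch A1 v is Some i then Spart A1 i v else set0.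

Definition beta (alpha : nat) : nat := (alpha.-1)./2.

Definition gbit (A1 : {set 'I_n}) (alpha : nat) (v : 'I_n) : bool :=
  (3 <= alpha) && (2 ^ beta alpha <= #|SvOf A1 v|).

Definition B1 (A1 : {set 'I_n}) (alpha : nat) : {set 'I_n} :=
  [set v | gbit A1 alpha v].

Variable port : 'I_n -> 'I_n -> nat.

(* Advice tree T_v: depth d_v = log2 n'_v, n'_v the smallest power of 2 >=
   deg v; leaf k (0 <= k < 2^d_v, left to right) is labeled min(k+1, deg v). *)
Definition tdepth (v : 'I_n) : nat := up_log 2 (deg v).
Definition leaf_label (v : 'I_n) (k : nat) : nat := minn k.+1 (deg v).

(* The root path of length l given by the binary number b (0 <= b < 2^l) has
   below its endpoint the leaves b*2^(d-l) .. (b+1)*2^(d-l) - 1; its port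
   range is [smallest label, largest label] of those leaves. *)
Definition path_range (v : 'I_n) (l b : nat) : nat * nat :=
  let s := 2 ^ (tdepth v - l) in
  (leaf_label v (b * s), leaf_label v ((b.+1) * s).-1).

(* P_v^beta(w): range of the length-beta string whose subtree contains the
   leaf of v's port to w (length capped by the tree depth). *)
Definition Prange (alpha : nat) (v w : 'I_n) : nat * nat :=
  let l := minn (beta alpha) (tdepth v) in
  path_range v l ((port v w).-1 %/ 2 ^ (tdepth v - l)).

Definition in_range (r : nat * nat) (p : nat) : bool := r.1 <= p <= r.2.

Definition range_nodes (v : 'I_n) (r : nat * nat) : {set 'I_n} :=
  [set u in nbr v | in_range r (port v u)].

Definition min_node (S : {set 'I_n}) : option 'I_n :=
  [pick u in S | [forall u' in S, u <= u']].

Definition Lambda (A1 : {set 'I_n}) (alpha : nat) (v : 'I_n)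
  : option (nat * nat) :=
  if (3 <= alpha) && ~~ gbit A1 alpha v then
    omap (Prange alpha v) (min_node (SvOf A1 v))
  else None.

(* Proxy advice chain of v: S'_1 = S_v, w_j = min S'_j,
   S'_{j+1} = S'_j minus the nodes reached via ports in P_v(w_j);
   Pi_{w_j} = P_v(w_{j+1}) (none if S'_{j+1} is empty). *)
Fixpoint chain_proxy (alpha : nat) (v : 'I_n) (S' : {set 'I_n}) (fuel : nat)
  (w : 'I_n) : option (nat * nat) :=
  if fuel is f.+1 then
    if min_node S' is Some wj then
      let S'' := S' :\: [set u in S' | in_range (Prange alpha v wj) (port v u)] in
      if w == wj then omap (Prange alpha v) (min_node S'')
      else chain_proxy alpha v S'' f w
    else None
  else None.

Definition Pi (A1 : {set 'I_n}) (alpha : nat) (w : 'I_n) : option (nat * nat) :=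
  if 3 <= alpha then
    if [pick v | (w \in SvOf A1 v) && ~~ gbit A1 alpha v] is Some v then
      chain_proxy alpha v (SvOf A1 v) n w
    else None
  else None.

(* Execution of the algorithm, given the randomness of the successive calls *)
(* to IteratedQuantumSearch.                                                 *)
(* A call by actor v on the port range corresponding to the neighbour set X  *)
(* (|X| = size of the range) with target set T = asleep nodes of X (i.e. the *)
(* ports with f(p) = 1) and internal randomness r returns                    *)
(* qs r v X T = (found set, number of messages of the call).                 *)
Variables (A1 : {set 'I_n}) (alpha : nat).
Variables (Rnd : Type)
  (qs : Rnd -> 'I_n -> {set 'I_n} -> {set 'I_n} -> {set 'I_n} * nat).

Record state := State {
  awake : {set 'I_n};
  woke_epoch : {ffun 'I_n -> nat};  (* epoch of waking; 0 = initially awake *)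
  ncalls : nat;
  costB1 : nat                      (* messages in phases with a B_1 actor *)
}.

(* one search by v on X, in epoch i, using call randomness rnd (ncalls st);
   found neighbours are woken by classical messages. *)
Definition do_search (rnd : nat -> Rnd) (i : nat) (v : 'I_n) (X : {set 'I_n})
  (st : state) : state * {set 'I_n} * nat :=
  let out := qs (rnd (ncalls st)) v X (X :\: awake st) in
  let F := out.1 :&: X in
  let newly := F :\: awake st in
  (State (awake st :|: F)
         [ffun u => if u \in newly then i else woke_epoch st u]
         (ncalls st).+1 (costB1 st),
   newly, out.2 + #|F|).

(* the proxy-advice loop of an actor with g_v = 0 and nonempty Lambda_v;
   among several received proxy advices (impossible when the searches
   succeed) the one of the smallest-ID sender is used. *)
Fixpoint proxy_loop (rnd : nat -> Rnd) (i : nat) (v : 'I_n) (r : nat * nat)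
  (fuel : nat) (st : state) : state * nat :=
  if fuel is f.+1 then
    let: (st', newly, m) := do_search rnd i v (range_nodes v r) st in
    let senders := [set w in newly | Pi A1 alpha w != None] in
    let m' := m + #|senders| in
    match min_node senders with
    | Some w => if Pi A1 alpha w is Some r' then
                  let: (st'', m'') := proxy_loop rnd i v r' f st' in (st'', m' + m'')
                else (st', m')
    | None => (st', m')
    end
  else (st, 0).

Definition act (rnd : nat -> Rnd) (i : nat) (v : 'I_n) (st : state) : state :=
  let: (st', m) :=
    if (alpha <= 2) || gbit A1 alpha v then
      let: (st', _, m) := do_search rnd i v (nbr v) st in (st', m)
    else if Lambda A1 alpha v is Some r then proxy_loop rnd i v r n st
    else (st, 0) in
  State (awake st') (woke_epoch st') (ncalls st')
        (costB1 st' + (if v \in B1 A1 alpha then m else 0)).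

(* phase j of epoch i: node with ID j+1 acts iff it was woken during epoch
   i-1 (initially awake nodes: epoch 0, so they act in epoch 1) *)
Definition phase (rnd : nat -> Rnd) (i : nat) (st : state) (j : 'I_n) : state :=
  if (j \in awake st) && (woke_epoch st j == i.-1) then act rnd i j st else st.

Definition run_epoch (rnd : nat -> Rnd) (i : nat) (st : state) : state :=
  foldl (phase rnd i) st (enum 'I_n).

(* epochs 1..n (no node can act in a later epoch) *)
Definition run (rnd : nat -> Rnd) : state :=
  foldl (fun st i => run_epoch rnd i st)
        (State A1 [ffun=> 0] 0 0) (iota 1 n).

Definition B1_messages (rnd : nat -> Rnd) : nat := costB1 (run rnd).

End Graph.

(* Probability.  Each call uses fresh independent randomness drawn from the *)
(* distribution mu on a finite type Rnd; the execution has at most n*n calls *)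
(* so the sample space is {ffun 'I_(n*n).+1 -> Rnd} with product measure.   *)
Section Prob.
Variable R : realType.
Local Open Scope ring_scope.

Definition distribution (Rnd : finType) (mu : Rnd -> R) : Prop :=
  (forall r, 0 <= mu r) /\ \sum_r mu r = 1.

Definition prob1 (Rnd : finType) (mu : Rnd -> R) (E : pred Rnd) : R :=
  \sum_(r | E r) mu r.

Definition ncalls_max (n : nat) : nat := (n * n).+1.

Definition sample (n : nat) (Rnd : finType) (rho : {ffun 'I_(ncalls_max n) -> Rnd})
  : nat -> Rnd := fun k => rho (inord k).

Definition probN (n : nat) (Rnd : finType) (mu : Rnd -> R)
  (E : pred {ffun 'I_(ncalls_max n) -> Rnd}) : R :=
  \sum_(rho | E rho) \prod_k mu (rho k).

(* Guarantee of IteratedQuantumSearch with constants KQ (in the O) and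
   cQ (failure probability 1/n^cQ): for every actor v, every port range
   (neighbour set X) and every set T of marked ports (f = 1), w.h.p. it
   finds exactly T using <= KQ sqrt(|X| max(|T|,1)) log n messages. *)
Definition search_spec (n : nat) (adj : rel 'I_n) (Rnd : finType) (mu : Rnd -> R)
  (qs : Rnd -> 'I_n -> {set 'I_n} -> {set 'I_n} -> {set 'I_n} * nat)
  (KQ : R) (cQ : nat) : Prop :=
  forall (v : 'I_n) (X T : {set 'I_n}), X \subset nbr adj v -> T \subset X ->
    prob1 mu (fun r => ((qs r v X T).1 == T) &&
       (((qs r v X T).2)%:R <=
          KQ * Num.sqrt ((#|X| * maxn #|T| 1)%N%:R) * ln (n%:R : R)))
    >= 1 - 1 / (n%:R ^+ cQ).

End Prob.

(* Main.v *)
Require Import Defs.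
From HB Require Import structures.
From mathcomp Require Import all_boot all_order all_algebra.
From mathcomp Require Import reals exp.
From mathcomp Require Import zify.
Import Order.TTheory GRing.Theory Num.Theory.
Set Implicit Arguments. Unset Strict Implicit. Unset Printing Implicit Defensive.
Section Comb.
Variables (n : nat) (adj : rel 'I_n) (A1 : {set 'I_n}).
Hypothesis symA : symmetric adj.

Lemma iter_epoch k :
  iter k (@epoch_step n adj) (A1, set0) = (epochA adj A1 k.+1, epochA adj A1 k).
Proof.
by elim: k => [|k IH] //=.
Qed.

Lemma epochA_SS k :
  epochA adj A1 k.+2 = Snext adj (epochA adj A1 k.+1) (epochA adj A1 k).
Proof. by rewrite {1}/epochA /= iter_epoch. Qed.

Lemma epochA0 : epochA adj A1 0 = set0.
Proof. by []. Qed.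

Lemma epochS_eq i : 0 < i -> epochS adj A1 i = epochA adj A1 i.+1.
Proof. by case: i => // k _; rewrite /epochS epochA_SS. Qed.

Lemma nbr_layers j y w : 0 < j -> w \in epochA adj A1 j -> adj w y ->
  [\/ y \in epochA adj A1 j.+1, y \in epochA adj A1 j | y \in epochA adj A1 j.-1].
Proof.
case: j => // k _ Hw Hwy.
rewrite epochA_SS /Snext /=.
case Hy: (y \in epochA adj A1 k.+1); first by apply: Or32.
case Hy2: (y \in epochA adj A1 k); first by apply: Or33.
apply: Or31; rewrite !inE Hy Hy2 /=.
by apply/bigcupP; exists w => //; rewrite inE.
Qed.

Lemma layers_disj i j x : j < i -> x \in epochA adj A1 i -> x \in epochA adj A1 j -> False.
Proof.
elim/ltn_ind: i j x => i IH j x.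
case: i IH => [|[|k]] IH //.
  by case: j => // _ _; rewrite epochA0 inE.
move=> Hji; rewrite epochA_SS /Snext !inE negb_or => /andP[/andP[Hx1 Hx2] /bigcupP[u Hu]].
rewrite inE => Hux Hxj.
case: j Hji Hxj => [|j] Hji Hxj; first by rewrite epochA0 inE in Hxj.
have Hne1 : j.+1 != k.+1 by apply/eqP => E; rewrite -E Hxj in Hx1.
have Hne2 : j.+1 != k by apply/eqP => E; rewrite -E Hxj in Hx2.
have Hjk : j.+2 < k.+1 by lia.
have Hxu : adj x u by rewrite symA.
case: (nbr_layers (ltn0Sn j) Hxj Hxu) => Hu'.
- by apply: (IH k.+1 (ltnSn _) j.+2 u Hjk Hu Hu').
- by apply: (IH k.+1 (ltnSn _) j.+1 u (ltnW Hjk) Hu Hu').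
- by apply: (IH k.+1 (ltnSn _) j u (ltnW (ltnW Hjk)) Hu Hu').
Qed.

Lemma layers_uniq i i' v : v \in epochA adj A1 i -> v \in epochA adj A1 i' -> i = i'.
Proof.
move=> H1 H2; case: (ltngtP i i') => // H.
- by case: (layers_disj H H2 H1).
- by case: (layers_disj H H1 H2).
Qed.

Lemma claimed_mono (A S : {set 'I_n}) k k' : k <= k' -> claimed adj A S k \subset claimed adj A S k'.
Proof.
elim: k' => [|k' IH]; first by rewrite leqn0 => /eqP ->.
rewrite leq_eqVlt => /orP[/eqP->|]; first by [].
rewrite ltnS => /IH H; apply: (subset_trans H) => /=; exact: subsetUl.
Qed.

Lemma claimed_step (A S : {set 'I_n}) (u : 'I_n) : u \in A ->
  nbr adj u :&: (S :\: claimed adj A S (val u)) \subset claimed adj A S (val u).+1.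
Proof.
move=> Hu /=; rewrite valK Hu; exact: subsetUr.
Qed.

Lemma SvOf_spec v u : u \in SvOf adj A1 v ->
  exists i, [/\ 0 < i, v \in epochA adj A1 i & u \in Spart adj A1 i v].
Proof.
rewrite /SvOf /actor_epoch; case: pickP => [i Hi|] /=; last by rewrite inE.
move=> Hu; exists i; split => //.
by case: (nat_of_ord i) Hi => //; rewrite epochA0 inE.
Qed.

Lemma SvOf_disj v v' u : u \in SvOf adj A1 v -> u \in SvOf adj A1 v' -> v = v'.
Proof.
move=> /SvOf_spec [i [Hi Hv Hu]] /SvOf_spec [i' [Hi' Hv' Hu']].
have HS : forall i v, 0 < i -> u \in Spart adj A1 i v -> u \in epochA adj A1 i.+1.
  by move=> i0 v0 H0; rewrite -epochS_eq // /Spart => /setIP[_ /setDP[H _]].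
have E : i = i'.
  apply/eqP; apply/negPn/negP => Hne.
  have := HS _ _ Hi Hu; have := HS _ _ Hi' Hu'.
  move=> H1 H2; have := layers_uniq H1 H2; case => E.
  by rewrite E eqxx in Hne.
subst i'.
have key : forall a b, val a < val b -> a \in epochA adj A1 i ->
    u \in Spart adj A1 i a -> u \in Spart adj A1 i b -> False.
  move=> a b Hab Ha Hua Hub.
  have H1 := claimed_step (epochS adj A1 i) Ha.
  have H2 := claimed_mono (epochA adj A1 i) (epochS adj A1 i) Hab.
  have Hc : u \in claimed adj (epochA adj A1 i) (epochS adj A1 i) (val b).
    by apply: (subsetP H2); apply: (subsetP H1); exact: Hua.
  by move: Hub; rewrite /Spart !inE Hc /= andbF.
case: (ltngtP (val v) (val v')) => H.
- by case: (key _ _ H Hv Hu Hu').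
- by case: (key _ _ H Hv' Hu' Hu).
- exact: val_inj.
Qed.

Lemma sum_SvOf : \sum_v #|SvOf adj A1 v| <= n.
Proof.
have -> : \sum_v #|SvOf adj A1 v| = \sum_v \sum_u (u \in SvOf adj A1 v : nat).
  apply: eq_bigr => v _; rewrite -sum1_card big_mkcond /=.
  by apply: eq_bigr => u _; case: (u \in _).
rewrite exchange_big /=.
rewrite -[X in _ <= X]card_ord -sum1_card.
apply: leq_sum => u _.
have -> : \sum_v (u \in SvOf adj A1 v : nat) = #|[pred v | u \in SvOf adj A1 v]|.
  rewrite -sum1_card [RHS]big_mkcond /=; apply: eq_bigr => v _; rewrite inE; by case: (u \in _).
apply/card_le1_eqP => a b Ha Hb; rewrite !inE in Ha Hb.
by rewrite (SvOf_disj Ha Hb).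
Qed.

Lemma B1_card alpha : #|B1 adj A1 alpha| * 2 ^ beta alpha <= n.
Proof.
apply: leq_trans (sum_SvOf).
rewrite -sum1_card big_distrl /= mul1n.
apply: leq_trans (_ : \sum_(v in B1 adj A1 alpha) #|SvOf adj A1 v| <= _).
  apply: leq_sum => v; rewrite inE /gbit => /andP[_ H]; exact: H.
rewrite [X in _ <= X](bigID (fun v => v \in B1 adj A1 alpha)) /=; exact: leq_addr.
Qed.
End Comb.
Section Proc.
Variables (n : nat) (adj : rel 'I_n) (port : 'I_n -> 'I_n -> nat) (A1 : {set 'I_n}) (alpha : nat).
Variables (Rnd : Type) (qs : Rnd -> 'I_n -> {set 'I_n} -> {set 'I_n} -> {set 'I_n} * nat).

Local Notation DS := (do_search qs).
Local Notation PL := (proxy_loop adj port A1 alpha qs).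
Local Notation ACT := (act adj port A1 alpha qs).
Local Notation PH := (phase adj port A1 alpha qs).

Definition agree (r1 r2 : nat -> Rnd) k := forall j, j < k -> r1 j = r2 j.

Lemma agree_le r1 r2 k k' : k <= k' -> agree r1 r2 k' -> agree r1 r2 k.
Proof. by move=> H A j Hj; apply: A; apply: leq_trans H. Qed.

Definition Rel0 i (st st' : state n) :=
  [/\ awake st \subset awake st',
      (forall u, u \in awake st -> woke_epoch st' u = woke_epoch st u),
      (forall u, u \notin awake st -> u \in awake st' -> woke_epoch st' u = i)
    & ncalls st <= ncalls st'].

Lemma Rel0_refl i st : Rel0 i st st.
Proof. by split => // u Hu Hu'; rewrite Hu' in Hu. Qed.

Lemma Rel0_trans i s1 s2 s3 : Rel0 i s1 s2 -> Rel0 i s2 s3 -> Rel0 i s1 s3.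
Proof.
case=> S1 W1 N1 C1 [S2 W2 N2 C2]; split.
- exact: subset_trans S2.
- by move=> u Hu; rewrite W2 ?W1 //; apply: (subsetP S1).
- move=> u Hu Hu3; case Hu2: (u \in awake s2).
    by rewrite W2 // N1.
  by rewrite N2 // Hu2.
- exact: leq_trans C2.
Qed.

Lemma DS_facts rnd i v X st :
  Rel0 i st (DS rnd i v X st).1.1 /\
  ncalls (DS rnd i v X st).1.1 = (ncalls st).+1 /\
  costB1 (DS rnd i v X st).1.1 = costB1 st.
Proof.
rewrite /do_search /=; split => //; split => //=.
- exact: subsetUl.
- by move=> u Hu; rewrite ffunE inE Hu.
- move=> u Hu; rewrite in_setU (negbTE Hu) /= => HF.
  by rewrite ffunE in_setD Hu HF.
Qed.

Lemma DS_causal r1 r2 i v X st : r1 (ncalls st) = r2 (ncalls st) ->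
  DS r1 i v X st = DS r2 i v X st.
Proof. by rewrite /do_search => ->. Qed.

Opaque do_search.

Lemma PL_S rnd i v r f st : PL rnd i v r f.+1 st =
    let: (st', newly, m) := DS rnd i v (range_nodes adj port v r) st in
    let senders := [set w in newly | Pi adj port A1 alpha w != None] in
    let m' := m + #|senders| in
    match min_node senders with
    | Some w => if Pi adj port A1 alpha w is Some r' then
                  let: (st'', m'') := PL rnd i v r' f st' in (st'', m' + m'')
                else (st', m')
    | None => (st', m')
    end.
Proof. by []. Qed.

Lemma PL_facts rnd i v r f st :
  [/\ Rel0 i st (PL rnd i v r f st).1,
      ncalls (PL rnd i v r f st).1 <= ncalls st + f &
      costB1 (PL rnd i v r f st).1 = costB1 st].
Proof.
elim: f r st => [|f IH] r st.
  by split => //=; [exact: Rel0_refl | rewrite addn0].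
have [R1 [N1 C1]] := DS_facts rnd i v (range_nodes adj port v r) st.
rewrite PL_S.
case E: (DS rnd i v (range_nodes adj port v r) st) => [[st' nw] m].
rewrite E /= in R1 N1 C1; cbv zeta.
case: min_node => [w|]; last first.
  by split => //; rewrite N1 addnS ltnS leq_addr.
case: (Pi adj port A1 alpha w) => [r'|]; last first.
  by split => //; rewrite N1 addnS ltnS leq_addr.
have [R2 N2 C2] := IH r' st'.
case E2: (PL rnd i v r' f st') => [st'' m''].
rewrite E2 /= in R2 N2 C2; split.
- exact: Rel0_trans R2.
- by rewrite (leq_trans N2) // N1 addnS addSn.
- by rewrite C2 C1.
Qed.

Lemma PL_gt rnd i v r f st : ncalls st < ncalls (PL rnd i v r f.+1 st).1.
Proof.
rewrite PL_S.
have [_ [N1 _]] := DS_facts rnd i v (range_nodes adj port v r) st.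
case E: (DS rnd i v (range_nodes adj port v r) st) => [[st' nw] m].
rewrite E /= in N1; cbv zeta.
case: min_node => [w|]; [case: (Pi adj port A1 alpha w) => [r'|] |]; rewrite /= ?N1 //.
have [[_ _ _ Hc] _ _] := PL_facts rnd i v r' f st'.
case E3: (PL rnd i v r' f st') => [st'' m'']; rewrite E3 /= in Hc.
by rewrite /= -N1.
Qed.

Lemma PL_causal r1 r2 i v r f st :
  agree r1 r2 (ncalls (PL r1 i v r f st).1) -> PL r1 i v r f st = PL r2 i v r f st.
Proof.
elim: f r st => [|f IH] r st //.
move=> Hag; have Hk := Hag _ (PL_gt r1 i v r f st).
rewrite !PL_S in Hag *.
rewrite -(DS_causal _ _ _ Hk).
case E: (DS r1 i v (range_nodes adj port v r) st) => [[st' nw] m].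
rewrite E in Hag; cbv zeta in Hag |- *.
move: Hag.
case: min_node => [w|]; [case: (Pi adj port A1 alpha w) => [r'|] |] => //.
case E3: (PL r1 i v r' f st') => [st'' m''] /= Hag.
by rewrite -IH E3 //.
Qed.
Lemma act_facts rnd i v st :
  [/\ Rel0 i st (ACT rnd i v st), ncalls (ACT rnd i v st) <= ncalls st + n &
      (v \notin B1 adj A1 alpha -> costB1 (ACT rnd i v st) = costB1 st)].
Proof.
have n0 : 0 < n by apply: leq_ltn_trans (leq0n v) (ltn_ord v).
rewrite /act; case Hc: (_ || _).
  have [R1 [N1 C1]] := DS_facts rnd i v (nbr adj v) st.
  case E: (DS rnd i v (nbr adj v) st) R1 N1 C1 => [[st' nw] m] /= R1 N1 C1.
  case: R1 => S1 W1 X1 L1.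
  split => //=; first by rewrite N1 -addn1 leq_add2l.
  by move=> Hv; rewrite (negbTE Hv) addn0 C1.
case: Lambda => [r|] /=; last first.
  split => //=; [by split => // u Hu Hu'; rewrite Hu' in Hu | exact: leq_addr | by move=> _; case: (v \in _); rewrite ?addn0].
have [R1 N1 C1] := PL_facts rnd i v r n st.
case E: (PL rnd i v r n st) R1 N1 C1 => [st' m] /= R1 N1 C1.
case: R1 => S1 W1 X1 L1.
split => //=.
by move=> Hv; rewrite (negbTE Hv) addn0 C1.
Qed.

Lemma act_B1 rnd i v st : v \in B1 adj A1 alpha ->
  ACT rnd i v st = State (awake (DS rnd i v (nbr adj v) st).1.1)
     (woke_epoch (DS rnd i v (nbr adj v) st).1.1)
     (ncalls (DS rnd i v (nbr adj v) st).1.1)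
     (costB1 (DS rnd i v (nbr adj v) st).1.1 + (DS rnd i v (nbr adj v) st).2).
Proof.
move=> Hv; have Hg : gbit adj A1 alpha v by move: Hv; rewrite inE.
rewrite /act Hg orbT Hv.
by case: (DS rnd i v (nbr adj v) st) => [[st' nw] m].
Qed.

Lemma act_causal r1 r2 i v st :
  agree r1 r2 (ncalls (ACT r1 i v st)) -> ACT r1 i v st = ACT r2 i v st.
Proof.
move=> Hag; rewrite /act in Hag *;
move: Hag; case Hc: (_ || _) => Hag.
  have [_ [N1 _]] := DS_facts r1 i v (nbr adj v) st.
  have Hk : r1 (ncalls st) = r2 (ncalls st).
    apply: Hag.
    by case E: (DS r1 i v (nbr adj v) st) N1 => [[st' nw] m] /= ->.
  by rewrite -(DS_causal _ _ _ Hk).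
case: Lambda Hag => [r|] Hag //.
rewrite -(PL_causal (r1 := r1) (r2 := r2)) //.
by case E: (PL r1 i v r n st) Hag => [st' m].
Qed.

Lemma foldl_causal (T : Type) (f : (nat -> Rnd) -> state n -> T -> state n) (l : seq T) :
  (forall x rnd st, ncalls st <= ncalls (f rnd st x)) ->
  (forall x r1 r2 st, agree r1 r2 (ncalls (f r1 st x)) -> f r1 st x = f r2 st x) ->
  (forall rnd st, ncalls st <= ncalls (foldl (f rnd) st l)) /\
  (forall r1 r2 st, agree r1 r2 (ncalls (foldl (f r1) st l)) ->
      foldl (f r1) st l = foldl (f r2) st l).
Proof.
move=> Hm Hc; elim: l => [|x l [IHm IHc]] //=; split.
  by move=> rnd st; apply: leq_trans (Hm x rnd st) (IHm _ _).
move=> r1 r2 st Hag.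
have E : f r1 st x = f r2 st x.
  by apply: Hc; apply: agree_le Hag; apply: IHm.
by rewrite -E; apply: IHc.
Qed.

Lemma phase_facts : (forall i v rnd st, ncalls st <= ncalls (PH rnd i st v)) /\
   (forall i v r1 r2 st, agree r1 r2 (ncalls (PH r1 i st v)) -> PH r1 i st v = PH r2 i st v).
Proof.
split.
  move=> i v rnd st; rewrite /phase; case: ifP => // _.
  by case: (act_facts rnd i v st) => [[_ _ _ H] _ _].
move=> i v r1 r2 st; rewrite /phase; case: ifP => // _.
exact: act_causal.
Qed.

Definition init_st : state n := State A1 [ffun=> 0] 0 0.

Definition run_upto (rnd : nat -> Rnd) (k : nat) : state n :=
  foldl (fun st i => run_epoch adj port A1 alpha qs rnd i st) init_st (iota 1 k).

Definition pre (rnd : nat -> Rnd) (i : nat) (v : 'I_n) : state n :=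
  foldl (PH rnd i) (run_upto rnd i.-1) (take v (enum 'I_n)).

Lemma run_upto_n rnd : run adj port A1 alpha qs rnd = run_upto rnd n.
Proof. by []. Qed.

Lemma epoch_facts l : (forall i rnd st, ncalls st <= ncalls (foldl (PH rnd i) st l)) /\
  (forall i r1 r2 st, agree r1 r2 (ncalls (foldl (PH r1 i) st l)) ->
      foldl (PH r1 i) st l = foldl (PH r2 i) st l).
Proof.
split => i; have [H1 H2] := phase_facts;
  have [] := @foldl_causal _ (fun rnd st v => PH rnd i st v) l (H1 i) (H2 i) => //.
Qed.

Lemma run_upto_facts k : (forall rnd, ncalls init_st <= ncalls (run_upto rnd k)) /\
  (forall r1 r2, agree r1 r2 (ncalls (run_upto r1 k)) -> run_upto r1 k = run_upto r2 k).
Proof.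
have [H1 H2] := @foldl_causal _ (fun rnd st i => run_epoch adj port A1 alpha qs rnd i st) (iota 1 k)
   (fun i rnd st => (epoch_facts (enum 'I_n)).1 i rnd st)
   (fun i r1 r2 st => (epoch_facts (enum 'I_n)).2 i r1 r2 st).
by split => [rnd|r1 r2]; [apply: H1 | apply: H2].
Qed.

Lemma pre_causal r1 r2 i v : agree r1 r2 (ncalls (pre r1 i v)) -> pre r1 i v = pre r2 i v.
Proof.
move=> Hag; rewrite /pre in Hag *.
have E : run_upto r1 i.-1 = run_upto r2 i.-1.
  apply: (run_upto_facts _).2; apply: agree_le Hag.
  exact: (epoch_facts _).1.
by rewrite -E; apply: (epoch_facts _).2.
Qed.
End Proc.
From mathcomp Require Import ring lra.

Lemma sq_le (R : realType) (x y : R) : (0 <= x -> 0 <= y -> x ^+ 2 <= y ^+ 2 -> x <= y)%R.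
Proof. by move=> hx hy; rewrite (ler_pXn2r (n:=2)) // ?nnegrE. Qed.

Lemma amgm (R : realType) (x y A : R) : (0 <= x -> 0 <= y -> 0 <= A -> A ^+ 2 <= x * y -> 2 * A <= x + y)%R.
Proof. move=> hx hy hA h; apply: sq_le; try lra.
have := sqr_ge0 (x - y). nra. Qed.

Lemma real_step (R : realType) (a d s t q : R) : (0 <= a -> 0 <= d -> 0 <= s -> 0 <= t -> 0 <= q -> q^+2 <= t + 1 ->
  a ^+ 2 <= d * (s + d) -> (a + q)^+2 <= (d + 1) * ((s + t) + (d + 1)))%R.
Proof. move=> Ha Hd Hs Ht Hq Hq2 Ha2.
have H1 : ((a * q) ^+ 2 <= (d * (t + 1)) * (s + d))%R.
  rewrite exprMn.
  have : (a ^+ 2 * q ^+ 2 <= (d * (s + d)) * (t + 1))%R.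
    apply: ler_pM => //; [exact: sqr_ge0 | exact: sqr_ge0].
  move=> H; apply: le_trans H _; lra.
have := amgm (x := (d * (t+1))%R) (y := (s + d)%R) (A := (a * q)%R).
have : (0 <= d * (t + 1))%R by apply: mulr_ge0 => //; lra.
have : (0 <= a * q)%R by apply: mulr_ge0.
move=> h1 h2 h3; have := h3 h2 ltac:(lra) h1 H1.
move=> *; nra.
Qed.

Lemma sqrt_bound (R : realType) (KQ L : R) (x y N : nat) : x <= N -> (0 <= L)%R ->
  (KQ * Num.sqrt ((x * y)%:R) * L <= `|KQ| * Num.sqrt (N%:R) * L * Num.sqrt (y%:R))%R.
Proof.
move=> HxN HL.
have H0 : (0 <= Num.sqrt ((x * y)%:R) * L)%R by apply: mulr_ge0 => //; exact: sqrtr_ge0.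
apply: (@le_trans _ _ (`|KQ| * Num.sqrt ((x * y)%:R) * L)%R).
  by rewrite -!mulrA; apply: ler_wpM2r => //; exact: ler_norm.
rewrite natrM sqrtrM ?ler0n //.
have : (Num.sqrt (x%:R) <= Num.sqrt (N%:R) :> R)%R by rewrite ler_sqrt ?ler0n // ler_nat.
have := sqrtr_ge0 (x%:R : R); have := sqrtr_ge0 (y%:R : R); have := normr_ge0 KQ.
move=> h1 h2 h3 h4.
have : (0 <= `|KQ| * L)%R by apply: mulr_ge0.
have : (0 <= `|KQ| * L * Num.sqrt (y%:R))%R by apply: mulr_ge0 => //; apply: mulr_ge0.
nra.
Qed.

Section Det.
Variables (R : realType) (KQ : R) (n : nat) (adj : rel 'I_n) (port : 'I_n -> 'I_n -> nat)
  (A1 : {set 'I_n}) (alpha : nat).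
Variables (Rnd : Type) (qs : Rnd -> 'I_n -> {set 'I_n} -> {set 'I_n} -> {set 'I_n} * nat).

Local Notation PH := (phase adj port A1 alpha qs).
Local Notation ACT := (act adj port A1 alpha qs).
Local Notation B := (B1 adj A1 alpha).

Definition acts (st : state n) i (v : 'I_n) : bool :=
  (v \in awake st) && (woke_epoch st v == i.-1).

Definition succ (rnd : nat -> Rnd) (st : state n) (v : 'I_n) : bool :=
  let X := nbr adj v in let T := X :\: awake st in
  let o := qs (rnd (ncalls st)) v X T in
  (o.1 == T) && ((o.2)%:R <= KQ * Num.sqrt ((#|X| * maxn #|T| 1)%N%:R) * ln (n%:R : R))%R.

Definition Dall (st : state n) i p : {set 'I_n} :=
  [set u | (u \in awake st) &&
     ((woke_epoch st u < i.-1) || ((woke_epoch st u == i.-1) && (val u < p)))].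

Definition Cn : R := (`|KQ| * Num.sqrt (n%:R) * ln (n%:R))%R.

Definition InvD (st : state n) (D : {set 'I_n}) : Prop :=
  ncalls st <= n * #|D| /\
  exists a b : R,
   [/\ (0 <= a)%R, ((costB1 st)%:R <= Cn * a + b)%R,
       (a ^+ 2 <= (#|D :&: B|)%:R * ((#|awake st|)%:R + (#|D :&: B|)%:R))%R,
       (b <= (#|awake st|)%:R)%R & (b <= (#|D :&: B|)%:R * n%:R)%R].

Lemma Dall_noact st i v : ~~ acts st i v -> Dall st i (val v).+1 = Dall st i (val v).
Proof.
move=> H; apply/setP => u; rewrite !inE.
have [E|NE] := eqVneq u v.
  subst u; rewrite ltnSn ltnn /=; move: H; rewrite /acts.
  by case: (v \in _); case: (_ == _); rewrite /= ?orbF.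
have NE' : (val u == val v) = false by apply/negbTE.
by rewrite ltnS (leq_eqVlt (val u) (val v)) NE'.
Qed.

Lemma Dall_notin st i v : acts st i v -> v \notin Dall st i (val v).
Proof. by case/andP => Hv Hw; rewrite inE Hv (eqP Hw) ltnn eqxx ltnn. Qed.

Lemma Dall_act st st' i v : 0 < i -> acts st i v -> Rel0 i st st' ->
  Dall st' i (val v).+1 = v |: Dall st i (val v).
Proof.
move=> Hi /andP[Hv Hw] [S W N _]; apply/setP => u; rewrite !inE.
case Hu: (u \in awake st).
  rewrite (subsetP S _ Hu) W //=.
  have [E|NE] := eqVneq u v.
    by subst u; rewrite (eqP Hw) eqxx ltnSn orbT.
  have NE' : (val u == val v) = false by apply/negbTE.
  have -> : (val u < (val v).+1) = (val u < val v) by rewrite ltnS (leq_eqVlt (val u) (val v)) NE'.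
  by [].
have -> : (u == v) = false by apply/eqP => E; rewrite E Hv in Hu.
rewrite /=; case Hu': (u \in awake st') => //=.
rewrite N ?Hu //.
have h1 : (i < i.-1) = false by apply/negbTE; rewrite -leqNgt leq_pred.
have h2 : (i == i.-1) = false by move: Hi; case: (i) => // k _; rewrite /= eqn_leq ltnn.
by rewrite h1 h2.
Qed.

Lemma Dall_epoch st i : 0 < i -> Dall st i n = Dall st i.+1 0.
Proof.
move=> Hi; apply/setP => u; rewrite !inE ltn_ord andbT ltn0 andbF orbF /=.
congr andb; move: Hi; case: (i) => // k _ /=.
by rewrite ltnS (leq_eqVlt (woke_epoch st u) k) orbC.
Qed.

Lemma setIU1 (D B' : {set 'I_n}) v : v \in B' -> (v |: D) :&: B' = v |: (D :&: B').
Proof.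
move=> Hv; apply/setP => u; rewrite !inE.
by case: (eqVneq u v) => [->|] //=; rewrite Hv.
Qed.

Lemma setIU1n (D B' : {set 'I_n}) v : v \notin B' -> (v |: D) :&: B' = D :&: B'.
Proof.
move=> Hv; apply/setP => u; rewrite !inE.
by case: (eqVneq u v) => [->|] //=; rewrite (negbTE Hv) andbF.
Qed.

Lemma phase_inv rnd i st (v : 'I_n) : 0 < i -> InvD st (Dall st i v) ->
  (acts st i v -> v \in B -> ncalls st < (n * n).+1 -> succ rnd st v) ->
  InvD (PH rnd i st v) (Dall (PH rnd i st v) i (val v).+1).
Proof.
move=> Hi [Hc [a [b [Ha Hcost Ha2 Hb1 Hb2]]]] Hg.
have n0 : 0 < n := leq_ltn_trans (leq0n v) (ltn_ord v).
have HL : (0 <= ln (n%:R : R))%R by apply: ln_ge0; rewrite ler1n.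
rewrite /phase -/(acts st i v).
case Hact: (acts st i v); last first.
  rewrite Dall_noact ?Hact //; split => //; by exists a, b.
have [HR HN HC] := act_facts adj port A1 alpha qs rnd i v st.
rewrite (Dall_act Hi Hact HR).
have Hnot := Dall_notin Hact.
move: Hc Ha2 Hb1 Hb2 Hnot; set D := Dall st i v => Hc Ha2 Hb1 Hb2 Hnot.
have HcD : #|v |: D| = (#|D|).+1 by rewrite cardsU1 Hnot.
have Hnc : ncalls (ACT rnd i v st) <= n * #|v |: D|.
  by rewrite HcD mulnS addnC (leq_trans HN) // leq_add2r.
split; first exact: Hnc.
case HB: (v \in B); last first.
  rewrite setIU1n ?HB //; exists a, b.
  have Haw : #|awake st| <= #|awake (ACT rnd i v st)|.
    by case: HR => S _ _ _; exact: subset_leq_card.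
  rewrite HC ?HB //; split => //.
  - apply: le_trans Ha2 _; apply: ler_wpM2l; first exact: ler0n.
    by rewrite lerD2r ler_nat.
  - by apply: le_trans Hb1 _; rewrite ler_nat.
have Hlt : ncalls st < (n * n).+1.
  have : #|v |: D| <= n by rewrite -[X in _ <= X]card_ord; exact: max_card.
  rewrite HcD => HD; rewrite ltnS (leq_trans Hc) // leq_mul2l ltnW ?orbT //.
have := Hg Hact HB Hlt; rewrite /succ.
rewrite act_B1 ?HB // /do_search /=.
set X := nbr adj v; set T := X :\: awake st; set o := qs _ v X T.
case/andP => /eqP Ho1 Ho2.
rewrite setIU1 ?HB //.
have HnotB : v \notin D :&: B by rewrite inE (negbTE Hnot).
have HdB : #|v |: (D :&: B)| = (#|D :&: B|).+1 by rewrite cardsU1 HnotB.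
rewrite HdB Ho1 (setIidPl (subsetDl X (awake st))).
have HTs : #|awake st :|: T| = #|awake st| + #|T|.
  rewrite -[RHS](cardsUI (awake st) T) (_ : awake st :&: T = set0) ?cards0 ?addn0 //.
  by apply/setP => u; rewrite !inE; case: (u \in awake st); rewrite ?andbF.
rewrite HTs.
have HTn : #|T| <= n by rewrite -[X in _ <= X]card_ord max_card.
have Hdeg : #|X| <= n by rewrite -[X in _ <= X]card_ord max_card.
have Ho3 : ((o.2)%:R <= Cn * Num.sqrt ((maxn #|T| 1)%:R))%R.
  exact: (le_trans Ho2 (sqrt_bound KQ (maxn #|T| 1) Hdeg HL)).
exists (a + Num.sqrt ((maxn #|T| 1)%:R))%R, (b + #|T|%:R)%R.
have Hq := sqrtr_ge0 ((maxn #|T| 1)%:R : R).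
have Hq2 : (Num.sqrt ((maxn #|T| 1)%:R) ^+ 2 <= #|T|%:R + 1 :> R)%R.
  by rewrite sqr_sqrtr ?ler0n // natr1 ler_nat geq_max leqnSn.
have HCn : (0 <= Cn)%R by rewrite /Cn; apply: mulr_ge0 => //; apply: mulr_ge0 => //; exact: sqrtr_ge0.
rewrite -natr1 !natrD.
have := ler0n R #|awake st|; have := ler0n R #|T|; have := ler0n R #|D :&: B|.
move=> h1 h2 h3.
split.
- exact: addr_ge0.
- rewrite mulrDr; lra.
- exact: real_step.
- lra.
- rewrite mulrDl mul1r; have : (#|T|%:R <= n%:R :> R)%R by rewrite ler_nat.
  lra.
Qed.
Local Notation PRE := (pre adj port A1 alpha qs).
Local Notation RU := (run_upto adj port A1 alpha qs).

Definition Good (rnd : nat -> Rnd) : Prop :=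
  forall i (v : 'I_n), 0 < i <= n -> acts (PRE rnd i v) i v -> v \in B ->
    ncalls (PRE rnd i v) < (n * n).+1 -> succ rnd (PRE rnd i v) v.

Lemma epoch_loop rnd i : 0 < i <= n -> Good rnd ->
  InvD (RU rnd i.-1) (Dall (RU rnd i.-1) i 0) -> forall p, p <= n ->
  InvD (foldl (PH rnd i) (RU rnd i.-1) (take p (enum 'I_n)))
       (Dall (foldl (PH rnd i) (RU rnd i.-1) (take p (enum 'I_n))) i p).
Proof.
move=> Hi HG H0; elim => [|p IH] Hp; first by rewrite take0.
have Hp' : p < size (enum 'I_n) by rewrite size_enum_ord.
rewrite (take_nth (Ordinal Hp)) // foldl_rcons.
have -> : nth (Ordinal Hp) (enum 'I_n) p = Ordinal Hp.
  exact: (nth_ord_enum (Ordinal Hp) (Ordinal Hp)).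
apply: (phase_inv (v := Ordinal Hp)).
- by case/andP: Hi.
- exact: IH (ltnW Hp).
- by move=> Ha Hb Hn; apply: (HG i (Ordinal Hp) Hi Ha Hb Hn).
Qed.

Lemma run_inv rnd : Good rnd -> forall k, k <= n ->
  InvD (RU rnd k) (Dall (RU rnd k) k.+1 0).
Proof.
move=> HG; elim => [|k IH] Hk.
  split => //; exists 0%R, 0%R; split => //=; rewrite ?mulr0 ?addr0 ?expr0n //=.
  - by apply: mulr_ge0 => //; apply: addr_ge0.
  - by apply: mulr_ge0.
have -> : RU rnd k.+1 = foldl (PH rnd k.+1) (RU rnd k) (take n (enum 'I_n)).
  rewrite /run_upto.
  have -> : iota 1 k.+1 = iota 1 k ++ [:: k.+1].
    by rewrite -(addn1 k) iotaD /= add1n addn1.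
  rewrite foldl_cat /=.
  by rewrite take_oversize ?size_enum_ord.
rewrite -Dall_epoch //.
by apply: epoch_loop => //; apply: IH; apply: ltnW.
Qed.

End Det.

Lemma det_bound (R : realType) (KQ : R) (n : nat) (adj : rel 'I_n) (port : 'I_n -> 'I_n -> nat)
  (A1 : {set 'I_n}) (alpha : nat) (Rnd : Type)
  (qs : Rnd -> 'I_n -> {set 'I_n} -> {set 'I_n} -> {set 'I_n} * nat) (rnd : nat -> Rnd) :
  symmetric adj -> 2 <= n -> Good KQ adj port A1 alpha qs rnd ->
  ((costB1 (run adj port A1 alpha qs rnd))%:R <=
     (2 * `|KQ| + (ln (2%:R : R))^-1) * Num.sqrt (n%:R ^+ 3 / 2%:R ^+ beta alpha) * ln (n%:R : R))%R.
Proof.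
move=> Hsym Hn HG.
have := run_inv HG (leqnn n); rewrite -run_upto_n.
set st := run _ _ _ _ _ _; set D := Dall _ _ _.
case=> _ [a [b [Ha Hc Ha2 Hb1 Hb2]]].
set d := #|D :&: B1 adj A1 alpha| in Ha2 Hb2.
have HdB : d <= #|B1 adj A1 alpha| by apply: subset_leq_card; exact: subsetIr.
have HBc := B1_card A1 Hsym alpha.
have Hdn : d * 2 ^ beta alpha <= n by apply: leq_trans HBc; rewrite leq_mul2r HdB orbT.
have Hs : #|awake st| <= n by rewrite -[X in _ <= X]card_ord max_card.
have Hdn' : d <= n by apply: leq_trans Hdn; rewrite leq_pmulr // expn_gt0.
set N : R := (n%:R)%R; set P : R := (2%:R ^+ beta alpha)%R.
have HP : (0 < P)%R by rewrite /P exprn_gt0 // ltr0n.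
have HN2 : (2%:R <= N)%R by rewrite /N ler_nat.
have HdP : (d%:R * P <= N)%R by rewrite /P /N -natrX -natrM ler_nat.
have HsN : ((#|awake st|)%:R <= N)%R by rewrite ler_nat.
have HdN : ((d%:R : R) <= N)%R by rewrite ler_nat.
have Hd0 : (0 <= (d%:R : R))%R by exact: ler0n.
have Hs0 : (0 <= ((#|awake st|)%:R : R))%R by exact: ler0n.
set Pi := (P^-1)%R.
have HPi : (0 < Pi)%R by rewrite invr_gt0.
have HPPi : (P * Pi = 1)%R by rewrite mulfV // gt_eqF.
have HdPi : ((d%:R : R) <= N * Pi)%R.
  by rewrite -(ler_pM2r HP) -mulrA [(Pi * P)%R]mulrC HPPi mulr1.
set Q := Num.sqrt (N ^+ 3 / P)%R.
have HQ0 : (0 <= Q)%R by exact: sqrtr_ge0.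
have HQ2 : (Q ^+ 2 = N ^+ 3 * Pi)%R.
  by rewrite sqr_sqrtr // mulr_ge0 // ?exprn_ge0 ?invr_ge0 ?ltW //; lra.
set L := ln N.
have HL2 : (0 < ln (2%:R : R))%R by apply: ln_gt0; rewrite ltr1n.
have HLL : (ln (2%:R : R) <= L)%R.
  by rewrite /L ler_ln // posrE; lra.
have HSN : (0 <= Num.sqrt N)%R by exact: sqrtr_ge0.
have HSN2 : (Num.sqrt N ^+ 2 = N)%R by rewrite sqr_sqrtr //; lra.
have H1 : (Num.sqrt N * a <= 2 * Q)%R.
  apply: sq_le; [exact: mulr_ge0 | lra |].
  rewrite exprMn HSN2 exprMn HQ2.
  have : (a ^+ 2 <= d%:R * (2 * N))%R.
    apply: le_trans Ha2 _; apply: ler_wpM2l => //; lra.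
  move=> Ha2'.
  have : (N * a ^+ 2 <= N * (d%:R * (2 * N)))%R by apply: ler_wpM2l => //; lra.
  have : (N * (d%:R * (2 * N)) <= N * ((N * Pi) * (2 * N)))%R.
    apply: ler_wpM2l; first lra. apply: ler_wpM2r => //; lra.
  have : (0 <= N ^+ 3 * Pi)%R by apply: mulr_ge0; [apply: exprn_ge0; lra | lra].
  rewrite !expr2 (_ : N ^+ 3 = N * N * N)%R; last by rewrite !exprS expr0 mulr1 mulrA.
  move=> *; nra.
have H2 : (b <= (ln (2%:R : R))^-1 * Q * L)%R.
  have HQL : (0 <= (ln (2%:R : R))^-1 * Q * L)%R.
    by apply: mulr_ge0 => //; [apply: mulr_ge0 => //; rewrite invr_ge0; lra | lra].
  case: (posnP d) => Hd.
    by move: Hb2; rewrite Hd mul0r => Hb; apply: le_trans Hb HQL.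
  have HPN : (P <= N)%R.
    apply: le_trans HdP; rewrite ler_peMl //; first lra.
    by rewrite ler1n.
  have HNQ : (N <= Q)%R.
    apply: sq_le; [lra | exact: HQ0 |].
    rewrite HQ2.
    have : (N ^+ 2 = N ^+ 2 * P * Pi)%R by rewrite -mulrA HPPi mulr1.
    move=> ->; rewrite (_ : N ^+ 3 = N ^+ 2 * N)%R; last by rewrite exprSr.
    apply: ler_wpM2r; first lra. apply: ler_wpM2l => //; first exact: exprn_ge0 (ltW (lt_le_trans _ HN2)).
  have HQL' : (Q <= (ln (2%:R : R))^-1 * Q * L)%R.
    have E : ((ln (2%:R : R))^-1 * Q * L = Q * (L / ln (2%:R : R)))%R.
      by rewrite mulrC mulrA mulrC.
    have : (1 <= L / ln (2%:R : R))%R by rewrite ler_pdivlMr // mul1r.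
    rewrite E => *; nra.
  lra.
apply: le_trans Hc _.
rewrite /Cn -/N -/L.
have : (`|KQ| * L * (Num.sqrt N * a) <= `|KQ| * L * (2 * Q))%R.
  apply: ler_wpM2l => //; apply: mulr_ge0 => //; lra.
have := normr_ge0 KQ.
move=> *; nra.
Qed.
Section Prob2.
Variables (R : realType) (Rnd : finType) (n0 : nat) (mu : Rnd -> R).
Local Notation N := (ncalls_max n0).
Hypothesis Hmu : distribution mu.
Local Open Scope ring_scope.

Local Notation FF := {ffun 'I_N -> Rnd}.
Definition W (rho : FF) : R := \prod_k mu (rho k).

Lemma mu_ge0 r : 0 <= mu r. Proof. by case: Hmu. Qed.
Lemma mu_sum : \sum_r mu r = 1. Proof. by case: Hmu. Qed.

Lemma W_ge0 rho : 0 <= W rho.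
Proof. by apply: prodr_ge0 => k _; exact: mu_ge0. Qed.

Lemma W_total : \sum_rho W rho = 1.
Proof.
rewrite /W -(bigA_distr_bigA (fun (k : 'I_N) r => mu r)) /=.
by rewrite big1 // => k _; exact: mu_sum.
Qed.

Lemma probN_E (E : pred FF) : probN (n := n0) mu E = \sum_(rho | E rho) W rho.
Proof. by []. Qed.

Lemma probN_ge0 E : 0 <= probN (n := n0) mu E.
Proof. by apply: sumr_ge0 => rho _; exact: W_ge0. Qed.

Lemma probN_compl (E : pred FF) : probN (n := n0) mu E = 1 - probN (n := n0) mu (predC E).
Proof.
rewrite !probN_E -W_total (bigID E predT) /=.
by rewrite addrK.
Qed.

Lemma probN_mono (E1 E2 : pred FF) : (forall rho, E1 rho -> E2 rho) -> probN (n := n0) mu E1 <= probN (n := n0) mu E2.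
Proof.
move=> H; rewrite !probN_E [X in _ <= X](bigID E1) /=.
have -> : \sum_(i | E2 i && E1 i) W i = \sum_(i | E1 i) W i.
  by apply: eq_bigl => rho; case E: (E1 rho); rewrite ?andbF ?andbT ?(H _ E).
rewrite lerDl; apply: sumr_ge0 => rho _; exact: W_ge0.
Qed.

Lemma probN_union (I : finType) (B : I -> pred FF) :
  probN (n := n0) mu (fun rho => [exists x, B x rho]) <= \sum_x probN (n := n0) mu (B x).
Proof.
rewrite probN_E.
under [X in _ <= X]eq_bigr => x _ do rewrite probN_E big_mkcond /=.
rewrite exchange_big /= big_mkcond /=.
apply: ler_sum => rho _.
case: existsP => [[x Hx]|_]; last first.
  by apply: sumr_ge0 => x _; case: ifP => // _; exact: W_ge0.
rewrite (bigD1 x) //= Hx lerDl.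
by apply: sumr_ge0 => y _; case: ifP => // _; exact: W_ge0.
Qed.

Definition upd (rho : FF) (j : 'I_N) (r : Rnd) : FF := [ffun k => if k == j then r else rho k].

Lemma upd_upd rho j r r' : upd (upd rho j r) j r' = upd rho j r'.
Proof. by apply/ffunP => k; rewrite !ffunE; case: (k == j). Qed.

Lemma upd_id rho j : upd rho j (rho j) = rho.
Proof. by apply/ffunP => k; rewrite !ffunE; case: eqP => [->|]. Qed.

Lemma upd_at rho j r : upd rho j r j = r.
Proof. by rewrite ffunE eqxx. Qed.

Lemma W_upd rho j r : W (upd rho j r) = mu r * \prod_(k | k != j) mu (rho k).
Proof.
rewrite /W (bigD1 j) //= upd_at; congr (_ * _).
by apply: eq_bigr => k Hk; rewrite ffunE (negbTE Hk).
Qed.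

Lemma sum_decomp (r0 : Rnd) j (F : FF -> R) :
  \sum_(rho : FF) F rho = \sum_(rho : FF | rho j == r0) \sum_(r : Rnd) F (upd rho j r).
Proof.
rewrite [RHS](exchange_big_dep predT) //=.
rewrite (partition_big (fun rho : FF => rho j) predT) //=.
apply: eq_bigr => r _.
rewrite (reindex_onto (fun rho => upd rho j r) (fun rho => upd rho j r0)) /=.
  apply: eq_bigl => rho; rewrite upd_at eqxx andbT upd_upd.
  apply/eqP/eqP => [E|E]; first by rewrite -E upd_at.
  by rewrite -E upd_id.
by move=> rho /eqP <-; rewrite upd_upd upd_id.
Qed.

Lemma coord_bound (S : Type) (j : 'I_N) (s : FF -> S) (c : S -> bool) (g : S -> pred Rnd) (d : R) :
  (forall rho r, c (s rho) -> s (upd rho j r) = s rho) ->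
  (forall x, c x -> prob1 mu (fun r => ~~ g x r) <= d) -> 0 <= d ->
  probN (n := n0) mu (fun rho => c (s rho) && ~~ g (s rho) (rho j)) <= d.
Proof.
move=> H1 H2 Hd.
have [r0 _] : exists r0 : Rnd, true.
  case: (pickP (@predT Rnd)) => [r0 _|H]; first by exists r0.
  have := mu_sum; rewrite big_pred0 // => /eqP; rewrite eq_sym oner_eq0.
  done.
rewrite probN_E big_mkcond /= (sum_decomp r0 j).
set V := fun rho : FF => \prod_(k | k != j) mu (rho k).
have HV : forall rho, 0 <= V rho by move=> rho; apply: prodr_ge0 => k _; exact: mu_ge0.
apply: (@le_trans _ _ (\sum_(rho : FF | rho j == r0) d * V rho)).
  apply: ler_sum => rho _.
  case: (pickP (fun r => c (s (upd rho j r)))) => [r1 Hr1|Hno]; last first.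
    rewrite big1; first by apply: mulr_ge0.
    by move=> r _; rewrite Hno.
  set x := s (upd rho j r1).
  have Hx : forall r, s (upd rho j r) = x.
    move=> r; rewrite /x -(upd_upd rho j r1 r); exact: H1.
  under eq_bigr => r _ do rewrite Hx upd_at W_upd.
  rewrite Hr1 /=.
  rewrite -big_mkcond /= -mulr_suml mulrC.
  rewrite [X in _ <= X]mulrC; apply: ler_wpM2l; first exact: (HV rho).
  by have := H2 x Hr1; rewrite /prob1.
rewrite -mulr_sumr -[X in _ <= X]mulr1; apply: ler_wpM2l => //.
rewrite -W_total (sum_decomp r0 j W); apply: ler_sum => rho _.
under eq_bigr => r _ do rewrite W_upd.
by rewrite -mulr_suml mu_sum mul1r.
Qed.

End Prob2.
Lemma succ_ext (R : realType) (KQ : R) (n : nat) (adj : rel 'I_n) (Rnd : Type)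
  (qs : Rnd -> 'I_n -> {set 'I_n} -> {set 'I_n} -> {set 'I_n} * nat) r1 r2 st v :
  r1 (ncalls st) = r2 (ncalls st) -> succ KQ adj qs r1 st v = succ KQ adj qs r2 st v.
Proof. by rewrite /succ => ->. Qed.

Lemma prob1_compl (R : realType) (Rnd : finType) (mu : Rnd -> R) (P : pred Rnd) :
  distribution mu -> (prob1 mu (fun r => ~~ P r) = 1 - prob1 mu P)%R.
Proof.
case=> _ Hs; rewrite /prob1 -Hs (bigID P predT) /=.
by rewrite addrC addrK.
Qed.

Lemma ix_bound (n : nat) : 2 <= n -> n.+1 * n * (n * n).+1 <= n ^ 5.
Proof.
case: n => [|[|m]] // _.
rewrite !expnS expn0 muln1.
nia.
Qed.

Local Open Scope ring_scope.

Theorem lemma8 (R : realType) :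
  forall c : nat, exists cQ : nat, forall KQ : R, exists K : R,
  forall (n : nat) (adj : rel 'I_n) (A1 : {set 'I_n}) (alpha : nat)
         (port : 'I_n -> 'I_n -> nat)
         (Rnd : finType) (mu : Rnd -> R)
         (qs : Rnd -> 'I_n -> {set 'I_n} -> {set 'I_n} -> {set 'I_n} * nat),
    simple_graph adj -> connected_graph adj -> port_numbering adj port ->
    distribution mu -> search_spec adj mu qs KQ cQ ->
    probN (n := n) mu (fun rho =>
      (B1_messages adj port A1 alpha qs (sample rho))%:R
        <= K * Num.sqrt (n%:R ^+ 3 / 2%:R ^+ beta alpha) * ln (n%:R : R))
    >= 1 - 1 / (n%:R ^+ c).
Proof.
move=> c; exists (c + 5)%N => KQ; exists (2 * `|KQ| + (ln (2%:R : R))^-1).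
move=> n adj A1 alpha port Rnd mu qs [Hsym Hirr] _ _ Hmu Hspec.
set E := fun rho => _.
have [n0|n1|Hn2] : [\/ n = 0%N, n = 1%N | (2 <= n)%N].
  by case: n adj A1 port qs E Hspec Hsym Hirr => [|[|m]] *; [apply: Or31|apply: Or32|apply: Or33].
- subst n.
  have HE : forall rho, E rho.
    move=> rho; rewrite /E /B1_messages /run /=.
    by rewrite expr0n /= mul0r sqrtr0 mulr0 mul0r.
  apply: le_trans (probN_mono Hmu (E1 := predT) _); last by move=> rho _; exact: HE.
  have HT : probN (n := 0) mu predT = 1 by rewrite -(W_total 0 Hmu).
  rewrite HT lerBlDr lerDl; apply: divr_ge0 => //; exact: exprn_ge0.
- subst n; rewrite expr1n divr1 subrr; exact: probN_ge0.
pose N := ncalls_max n.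
pose Ix : finType := ('I_n.+1 * 'I_n * 'I_N)%type.
pose sv (i : nat) (v : 'I_n) (rho : {ffun 'I_N -> Rnd}) := pre adj port A1 alpha qs (sample rho) i v.
pose cB (i : nat) (v : 'I_n) (j : 'I_N) (x : state n) :=
  [&& ncalls x == val j, acts x i v & v \in B1 adj A1 alpha].
pose gB (v : 'I_n) (x : state n) (r : Rnd) := succ KQ adj qs (fun _ => r) x v.
pose Bad (x : Ix) (rho : {ffun 'I_N -> Rnd}) :=
  cB x.1.1 x.1.2 x.2 (sv x.1.1 x.1.2 rho) && ~~ gB x.1.2 (sv x.1.1 x.1.2 rho) (rho x.2).
have Hn0 : (0 < n%:R :> R) by rewrite ltr0n; apply: leq_trans Hn2.
pose d : R := 1 / n%:R ^+ (c + 5).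
have Hd0 : 0 <= d by apply: divr_ge0 => //; apply: exprn_ge0; exact: ltW.
have Hbad : forall x, probN mu (Bad x) <= d.
  move=> [[i v] j].
  apply: (coord_bound Hmu (j := j) (s := sv i v) (c := cB i v j) (g := gB v)) => //.
    move=> rho r /and3P [/eqP Hj _ _]; symmetry; apply: pre_causal.
    move=> m Hm.
    have HmN : (m < N)%N by apply: ltn_trans (ltn_ord j); rewrite -Hj.
    rewrite /sample ffunE; case: eqP => [Em|] //; exfalso; move: Hm.
    have E' : val (inord m : 'I_N) = m := inordK HmN.
    by rewrite Hj -Em E' ltnn.
  move=> st /and3P [_ _ HB].
  have Hs := Hspec v (nbr adj v) (nbr adj v :\: awake st) (subxx _) (subsetDl _ _).
  have Hs' : 1 - 1 / n%:R ^+ (c + 5) <= prob1 mu (gB v st) := Hs.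
  rewrite prob1_compl //; rewrite /d; lra.
have Hunion := probN_union Hmu Bad.
have Hsum : \sum_(x : Ix) probN mu (Bad x) <= #|Ix|%:R * d.
  apply: le_trans (_ : \sum_(x : Ix) d <= _); first by apply: ler_sum => x _; exact: Hbad.
  by rewrite sumr_const mulr_natl.
have HIx : (#|Ix| <= n ^ 5)%N.
  rewrite !card_prod !card_ord.
  have : (2 <= n)%N := Hn2.
  by move=> h; rewrite /N /ncalls_max; exact: ix_bound.
have Hnum : #|Ix|%:R * d <= 1 / n%:R ^+ c.
  apply: le_trans (_ : n%:R ^+ 5 * d <= _).
    apply: ler_wpM2r => //; by rewrite -natrX ler_nat.
  rewrite /d exprD.
  have hc : n%:R ^+ c != 0 :> R by apply: expf_neq0; rewrite gt_eqF.
  have h5 : n%:R ^+ 5 != 0 :> R by apply: expf_neq0; rewrite gt_eqF.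
  rewrite le_eqVlt; apply/orP; left; apply/eqP; field.
  by rewrite hc gt_eqF.
have HG : forall rho, ~~ [exists x, Bad x rho] -> E rho.
  move=> rho /existsPn Hno; rewrite /E /B1_messages.
  apply: (det_bound Hsym Hn2).
  move=> i v /andP[Hi0 Hin] Hact HB Hnc.
  have := Hno (inord i, v, Ordinal Hnc); rewrite /Bad /=.
  have Ei : ((inord i : 'I_n.+1) : nat) = i by rewrite inordK // ltnS.
  rewrite Ei /cB /sv /= eqxx Hact HB /= => /negPn Hg.
  rewrite (@succ_ext _ _ _ _ _ _ _ (fun _ => rho (Ordinal Hnc))) //.
  by rewrite /sample; congr (rho _); apply: val_inj; rewrite /= inordK.
have H1 : probN mu (fun rho => ~~ [exists x, Bad x rho]) <= probN mu E := probN_mono Hmu HG.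
have H2 := probN_compl Hmu (fun rho => ~~ [exists x, Bad x rho]).
have H3 : probN mu (predC (fun rho => ~~ [exists x, Bad x rho])) <=
          probN mu (fun rho => [exists x, Bad x rho]).
  by apply: (probN_mono Hmu) => rho /negPn.
lra.
Qed.
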